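(* The family $\mathcal A$ of achievement sets contained in $[0,1]$ is closed in $K_0([0,1])$ and in $K([0,1])$, with respect to the Pompeiu–Hausdorff metric.
   Context: For an absolutely convergent real series $\sum_n a_n$, its achievement set is $E(a_n):=\{\sum_{n\in A}a_n:\ A\subset\mathbb N\}$ (a compact set containing $0$). $\mathcal A$ denotes the family of all sets $E(a_n)$, for absolutely convergent real series $\sum a_n$, that are contained in $[0,1]$. $K([0,1])$ is the family of non-empty compact subsets of $[0,1]$ and $K_0([0,1])$ the family of compact subsets of $[0,1]$ containing $0$, both with the Pompeiu–Hausdorff metric $d_H(A,B)=\max\{\sup_{a\in A}\operatorname{dist}(a,B),\sup_{b\in B}\operatorname{dist}(b,A)\}$. *)

(* Defs.v *)
From Stdlib Require Import Reals.
From Coquelicot Require Import Coquelicot.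
Open Scope R_scope.

Definition abs_convergent (a : nat -> R) : Prop := ex_series (fun n => Rabs (a n)).

(* Achievement set E(a_n) = { sum_{n in A} a_n : A subset N };
   a subset A of N is represented by its indicator A : nat -> bool. *)
Definition achievement_set (a : nat -> R) (x : R) : Prop :=
  exists A : nat -> bool, is_series (fun n => if A n then a n else 0) x.

Definition in_unit_interval (S : R -> Prop) : Prop :=
  forall x, S x -> 0 <= x <= 1.

Definition in_K01 (S : R -> Prop) : Prop :=
  (exists x, S x) /\ compact S /\ in_unit_interval S.

Definition in_K0_01 (S : R -> Prop) : Prop :=
  S 0 /\ compact S /\ in_unit_interval S.

Definition in_calA (S : R -> Prop) : Prop :=
  exists a : nat -> R, abs_convergent a /\
    (forall x, S x <-> achievement_set a x) /\ in_unit_interval S.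

Definition dist_set (x : R) (B : R -> Prop) : R :=
  real (Glb_Rbar (fun r => exists b, B b /\ r = Rabs (x - b))).

(* Pompeiu–Hausdorff distance (finite for non-empty bounded sets). *)
Definition hausdorff_dist (A B : R -> Prop) : R :=
  Rmax (real (Lub_Rbar (fun r => exists a, A a /\ r = dist_set a B)))
       (real (Lub_Rbar (fun r => exists b, B b /\ r = dist_set b A))).

Definition closed_in_hausdorff (inX F : (R -> Prop) -> Prop) : Prop :=
  forall K, inX K -> ~ F K ->
    exists eps, 0 < eps /\
      forall K', inX K' -> hausdorff_dist K' K < eps -> ~ F K'.

(* Main.v *)
Require Import Defs.
From Stdlib Require Import Reals Lra Lia List ClassicalEpsilon FunctionalExtensionality.
From Coquelicot Require Import Coquelicot.
Open Scope R_scope.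

Fixpoint PS (f : nat -> R) (n : nat) : R :=
  match n with O => 0 | S m => PS f m + f m end.

Definition ser f l := Un_cv (PS f) l.
Definition mask (A : nat -> bool) (f : nat -> R) (n : nat) : R := if A n then f n else 0.
Definition ach a x := exists A, ser (mask A a) x.

Lemma PS_sum_n f n : PS f (S n) = sum_n f n.
Proof.
  induction n.
  - simpl. rewrite sum_O. ring.
  - rewrite sum_Sn. rewrite <- IHn. simpl. unfold plus; simpl. ring.
Qed.

Lemma Un_cv_shift u l : Un_cv u l <-> Un_cv (fun n => u (S n)) l.
Proof.
  split; intros H e He; destruct (H e He) as [N HN].
  - exists N. intros n Hn. apply HN. lia.
  - exists (S N). intros n Hn. destruct n. lia. apply HN. lia.
Qed.

Lemma is_series_ser f l : is_series f l <-> ser f l.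
Proof.
  unfold ser. rewrite Un_cv_shift.
  assert (E: (fun n => PS f (S n)) = sum_n f).
  { apply functional_extensionality. intro n. apply PS_sum_n. }
  rewrite E. rewrite <- is_lim_seq_Reals. unfold is_series, is_lim_seq. simpl. tauto.
Qed.

Lemma ach_iff a x : achievement_set a x <-> ach a x.
Proof.
  unfold achievement_set, ach. split; intros [A H]; exists A.
  - apply is_series_ser. exact H.
  - apply is_series_ser. exact H.
Qed.

Lemma PS_mono f m n : (forall i, 0 <= f i) -> (m <= n)%nat -> PS f m <= PS f n.
Proof.
  intros Hf Hmn. induction Hmn. lra. simpl. specialize (Hf m0). lra.
Qed.

Lemma PS_growing f : (forall i, 0 <= f i) -> Un_growing (PS f).
Proof. intros Hf n. simpl. specialize (Hf n). lra. Qed.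

Lemma PS_nonneg f n : (forall i, 0 <= f i) -> 0 <= PS f n.
Proof. intros Hf. apply (PS_mono f 0 n Hf). lia. Qed.

Lemma PS_ext f g n : (forall i, (i < n)%nat -> f i = g i) -> PS f n = PS g n.
Proof.
  induction n; intros H; simpl. reflexivity.
  rewrite IHn by (intros; apply H; lia). rewrite H by lia. reflexivity.
Qed.

Lemma PS_le f g n : (forall i, (i < n)%nat -> f i <= g i) -> PS f n <= PS g n.
Proof.
  induction n; intros H; simpl. lra.
  assert (PS f n <= PS g n) by (apply IHn; intros; apply H; lia).
  assert (f n <= g n) by (apply H; lia). lra.
Qed.

Lemma PS_diff f g n eta : (forall i, (i < n)%nat -> Rabs (f i - g i) <= eta) ->
  Rabs (PS f n - PS g n) <= INR n * eta.
Proof.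
  induction n; intros H.
  - simpl. rewrite Rminus_0_r, Rabs_R0. lra.
  - assert (H1: Rabs (PS f n - PS g n) <= INR n * eta) by (apply IHn; intros; apply H; lia).
    assert (H2: Rabs (f n - g n) <= eta) by (apply H; lia).
    rewrite S_INR. change (PS f (S n)) with (PS f n + f n). change (PS g (S n)) with (PS g n + g n).
    replace (PS f n + f n - (PS g n + g n)) with ((PS f n - PS g n) + (f n - g n)) by ring.
    eapply Rle_trans. apply Rabs_triang. lra.
Qed.

Lemma PS_add f N m : PS f (N + m) = PS f N + PS (fun i => f (N + i)%nat) m.
Proof.
  induction m; simpl. rewrite Nat.add_0_r. ring.
  rewrite Nat.add_succ_r. simpl. rewrite IHm. ring.
Qed.

Lemma PS_zero_after f N n : (forall i, (N <= i)%nat -> f i = 0) -> (N <= n)%nat -> PS f n = PS f N.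
Proof.
  intros H Hn. induction Hn. reflexivity. simpl. rewrite IHHn, H by lia. ring.
Qed.

Lemma ser_finite f N : (forall i, (N <= i)%nat -> f i = 0) -> ser f (PS f N).
Proof.
  intros H e He. exists N. intros n Hn. unfold R_dist.
  rewrite (PS_zero_after f N n H Hn). rewrite Rminus_eq_0, Rabs_R0. lra.
Qed.

Lemma ser_unique f l1 l2 : ser f l1 -> ser f l2 -> l1 = l2.
Proof. apply UL_sequence. Qed.

Lemma mono_conv f M : (forall i, 0 <= f i) -> (forall n, PS f n <= M) ->
  exists l, ser f l /\ l <= M.
Proof.
  intros Hf HM.
  destruct (growing_cv (PS f) (PS_growing f Hf)) as [l Hl].
  { exists M. intros x [i ->]. apply HM. }
  exists l. split. exact Hl.
  apply Rle_cv_lim with (Un := PS f) (Vn := fun _ => M); auto.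
  intros e He. exists O. intros. unfold R_dist. rewrite Rminus_eq_0, Rabs_R0. lra.
Qed.

Lemma ser_PS_le f l n : (forall i, 0 <= f i) -> ser f l -> PS f n <= l.
Proof. intros Hf H. apply (growing_ineq (PS f) l (PS_growing f Hf) H). Qed.

Lemma ser_tail f l N : ser f l -> ser (fun i => f (N + i)%nat) (l - PS f N).
Proof.
  intros H e He. destruct (H e He) as [M HM]. exists M. intros n Hn.
  unfold R_dist in *. specialize (HM (N + n)%nat ltac:(lia)).
  rewrite PS_add in HM. replace (PS (fun i => f (N + i)%nat) n - (l - PS f N))
    with (PS f N + PS (fun i => f (N + i)%nat) n - l) by ring. exact HM.
Qed.

Lemma mask_nonneg A f i : (forall i, 0 <= f i) -> 0 <= mask A f i.
Proof. intros Hf. unfold mask. destruct (A i). apply Hf. lra. Qed.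

Lemma mask_le A f i : (forall i, 0 <= f i) -> mask A f i <= f i.
Proof. intros Hf. unfold mask. destruct (A i). lra. apply Hf. Qed.

Lemma masked_tail f D A x N : (forall i, 0 <= f i) -> ser f D -> ser (mask A f) x ->
  0 <= x - PS (mask A f) N <= D - PS f N.
Proof.
  intros Hf HD Hx.
  pose proof (ser_tail _ _ N HD) as T1. pose proof (ser_tail _ _ N Hx) as T2.
  split.
  - pose proof (ser_PS_le (fun i => mask A f (N + i)%nat) _ 0 (fun i => mask_nonneg A f _ Hf) T2).
    simpl in H. lra.
  - apply (Rle_cv_lim (Un := PS (fun i => mask A f (N + i)%nat)) (Vn := PS (fun i => f (N + i)%nat))); auto.
    intro n. apply PS_le. intros. apply mask_le. exact Hf.
Qed.
Definition lsum (f : nat -> R) (l : list nat) := fold_right (fun x acc => f x + acc) 0 l.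

Lemma lsum_app f l1 l2 : lsum f (l1 ++ l2) = lsum f l1 + lsum f l2.
Proof. induction l1; simpl. ring. rewrite IHl1. ring. Qed.

Lemma lsum_map f g l : lsum f (map g l) = lsum (fun x => f (g x)) l.
Proof. induction l; simpl. reflexivity. rewrite IHl. reflexivity. Qed.

Lemma PS_lsum f n : PS f n = lsum f (seq 0 n).
Proof. induction n. reflexivity. rewrite seq_S, lsum_app. simpl. rewrite IHn. ring. Qed.

Lemma lsum_nonneg f l : (forall i, 0 <= f i) -> 0 <= lsum f l.
Proof. intros Hf. induction l; simpl. lra. specialize (Hf a). lra. Qed.

Lemma lsum_remove_le f x l : (forall i, 0 <= f i) -> lsum f (remove Nat.eq_dec x l) <= lsum f l.
Proof.
  intros Hf. induction l; simpl. lra.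
  destruct (Nat.eq_dec x a); simpl; specialize (Hf a); lra.
Qed.

Lemma lsum_remove f x l : (forall i, 0 <= f i) -> In x l ->
  f x + lsum f (remove Nat.eq_dec x l) <= lsum f l.
Proof.
  intros Hf. induction l; simpl. tauto.
  intros [->|Hin].
  - destruct (Nat.eq_dec x x); [|congruence]. pose proof (lsum_remove_le f x l Hf). lra.
  - destruct (Nat.eq_dec x a).
    + subst. pose proof (lsum_remove_le f a l Hf). lra.
    + simpl. specialize (IHl Hin). lra.
Qed.

Lemma lsum_le f l : (forall i, 0 <= f i) -> NoDup l -> forall l',
  (forall x, In x l -> f x <> 0 -> In x l') -> lsum f l <= lsum f l'.
Proof.
  intros Hf. induction l as [|x l0 IH]; intros Hnd l' H; simpl.
  - apply lsum_nonneg, Hf.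
  - apply NoDup_cons_iff in Hnd as [Hx Hnd].
    destruct (Req_dec (f x) 0) as [E|E].
    + rewrite E. rewrite Rplus_0_l. apply IH; auto. intros y Hy. apply H. now right.
    + assert (Hxl : In x l') by (apply H; auto; now left).
      assert (lsum f l0 <= lsum f (remove Nat.eq_dec x l')).
      { apply IH; auto. intros y Hy Hfy. apply in_in_remove.
        intro; subst; contradiction. apply H; auto. now right. }
      pose proof (lsum_remove f x l' Hf Hxl). lra.
Qed.

Definition lmax (l : list nat) := fold_right Nat.max 0%nat l.

Lemma lmax_ge l x : In x l -> (x <= lmax l)%nat.
Proof. induction l; simpl. tauto. intros [->|H]. lia. specialize (IHl H). lia. Qed.

Lemma injective_NoDup (s : nat -> nat) l : (forall i j, s i = s j -> i = j) -> NoDup l -> NoDup (map s l).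
Proof.
  intros Hs Hl. induction Hl; simpl. constructor.
  constructor; auto. intro H1. apply in_map_iff in H1 as [y [E Hy]].
  apply Hs in E. subst. contradiction.
Qed.

Lemma rearr_bound f s l m : (forall i, 0 <= f i) -> (forall i j, s i = s j -> i = j) ->
  ser f l -> PS (fun n => f (s n)) m <= l.
Proof.
  intros Hf Hs Hl. rewrite PS_lsum, <- lsum_map.
  eapply Rle_trans. 2: apply (ser_PS_le f l (S (lmax (map s (seq 0 m)))) Hf Hl).
  rewrite PS_lsum. apply lsum_le; auto. apply injective_NoDup; auto. apply seq_NoDup.
  intros x Hx _. apply in_seq. apply lmax_ge in Hx. lia.
Qed.

Lemma cover_prefix f (s : nat -> nat) : (forall m, f m <> 0 -> exists n, s n = m) ->
  forall M, exists m, forall i, (i < M)%nat -> f i <> 0 -> exists j, (j < m)%nat /\ s j = i.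
Proof.
  intros Hc M. induction M.
  - exists O. intros. lia.
  - destruct IHM as [m Hm]. destruct (Req_dec (f M) 0) as [E|E].
    + exists m. intros i Hi Hfi. destruct (Nat.eq_dec i M). subst; contradiction. apply Hm; auto. lia.
    + destruct (Hc M E) as [j Hj]. exists (Nat.max m (S j)). intros i Hi Hfi.
      destruct (Nat.eq_dec i M).
      * subst. exists j. split; auto. lia.
      * destruct (Hm i ltac:(lia) Hfi) as [j' [Hj' E']]. exists j'. split; auto. lia.
Qed.

Lemma rearr f s l : (forall i, 0 <= f i) -> (forall i j, s i = s j -> i = j) ->
  (forall m, f m <> 0 -> exists n, s n = m) -> ser f l -> ser (fun n => f (s n)) l.
Proof.
  intros Hf Hs Hc Hl e He. destruct (Hl e He) as [M HM].
  specialize (HM M (le_n M)). unfold R_dist in HM.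
  destruct (cover_prefix f s Hc M) as [m Hm].
  exists m. intros n Hn. unfold R_dist.
  assert (PS f M <= PS (fun n => f (s n)) m).
  { rewrite (PS_lsum f M), (PS_lsum (fun n => f (s n)) m), <- (lsum_map f s). apply lsum_le; auto. apply seq_NoDup.
    intros x Hx Hfx. apply in_seq in Hx. destruct (Hm x ltac:(lia) Hfx) as [j [Hj E]].
    subst. apply in_map. apply in_seq. lia. }
  assert (PS (fun n => f (s n)) m <= PS (fun n => f (s n)) n) by (apply PS_mono; auto).
  pose proof (rearr_bound f s l n Hf Hs Hl).
  pose proof (ser_PS_le f l M Hf Hl).
  rewrite Rabs_left1 by lra. rewrite Rabs_left1 in HM by lra. lra.
Qed.

Lemma ser_ext f g l : (forall n, f n = g n) -> ser f l -> ser g l.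
Proof. intros H. replace g with f. auto. apply functional_extensionality. auto. Qed.

Lemma finite_max (f : nat -> R) (Q : nat -> Prop) N : (exists j, (j < N)%nat /\ Q j) ->
  exists m, (m < N)%nat /\ Q m /\ forall j, (j < N)%nat -> Q j -> f j <= f m.
Proof.
  induction N; intros [j0 [Hj0 Q0]]. lia.
  destruct (Classical_Prop.classic (exists j, (j < N)%nat /\ Q j)) as [Hex|Hno].
  - destruct (IHN Hex) as [m [Hm [Qm Hmax]]].
    destruct (Classical_Prop.classic (Q N)) as [QN|QN].
    + destruct (Rle_lt_dec (f N) (f m)).
      * exists m. repeat split; auto. intros j Hj Qj. destruct (Nat.eq_dec j N). subst; auto. apply Hmax; auto; lia.
      * exists N. repeat split; auto. intros j Hj Qj. destruct (Nat.eq_dec j N). subst; lra.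
        specialize (Hmax j ltac:(lia) Qj). lra.
    + exists m. repeat split; auto. intros j Hj Qj. destruct (Nat.eq_dec j N). subst; contradiction. apply Hmax; auto; lia.
  - assert (j0 = N). { destruct (Nat.eq_dec j0 N); auto. exfalso. apply Hno. exists j0. split; auto; lia. }
    subst. exists N. repeat split; auto. intros j Hj Qj. destruct (Nat.eq_dec j N). subst; lra.
    exfalso. apply Hno. exists j. split; auto; lia.
Qed.

Lemma ser_terms_small f l e : ser f l -> 0 < e -> exists N, forall n, (N <= n)%nat -> Rabs (f n) < e.
Proof.
  intros H He. destruct (H (e/2) ltac:(lra)) as [N HN]. exists N. intros n Hn.
  pose proof (HN n Hn). pose proof (HN (S n) ltac:(lia)). unfold R_dist in *. simpl in *.
  replace (f n) with ((PS f n + f n - l) - (PS f n - l)) by ring.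
  eapply Rle_lt_trans. apply Rabs_triang. rewrite Rabs_Ropp. lra.
Qed.

Definition fresh (l : list nat) := S (lmax l).
Lemma fresh_notin l : ~ In (fresh l) l.
Proof. intro H. apply lmax_ge in H. unfold fresh in H. lia. Qed.

Definition pickP (f : nat -> R) (L : list nat) (m : nat) := ~ In m L /\ forall j, ~ In j L -> f j <= f m.

Lemma pick_ex f l : (forall i, 0 <= f i) -> ser f l -> forall L, exists m, pickP f L m.
Proof.
  intros Hf Hl L.
  destruct (Classical_Prop.classic (exists j, ~ In j L /\ 0 < f j)) as [[j0 [Hj0 Pj0]]|Hno].
  - destruct (ser_terms_small f l (f j0) Hl Pj0) as [N HN].
    destruct (finite_max f (fun j => ~ In j L) (Nat.max N (S j0))) as [m [Hm [Qm Hmax]]].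
    { exists j0. split; auto. lia. }
    exists m. split; auto. intros j Hj.
    destruct (Nat.lt_ge_cases j (Nat.max N (S j0))). apply Hmax; auto.
    specialize (HN j ltac:(lia)). rewrite Rabs_right in HN by (apply Rle_ge, Hf).
    specialize (Hmax j0 ltac:(lia) Hj0). lra.
  - exists (fresh L). split. apply fresh_notin. intros j Hj.
    destruct (Rle_lt_dec (f j) 0). pose proof (Hf (fresh L)). lra.
    exfalso. apply Hno. exists j. auto.
Qed.

Definition pick f L := epsilon (inhabits 0%nat) (pickP f L).

Fixpoint Lst f n : list nat :=
  match n with O => nil | S m => Lst f m ++ (pick f (Lst f m) :: nil) end.

Definition sg f n := pick f (Lst f n).

Lemma Lst_In f n x : In x (Lst f n) <-> exists j, (j < n)%nat /\ sg f j = x.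
Proof.
  induction n; simpl. split. tauto. intros [j [Hj _]]. lia.
  rewrite in_app_iff, IHn. simpl. split.
  - intros [[j [Hj E]]|[E|[]]]. exists j. split; auto. exists n. split; auto.
  - intros [j [Hj E]]. destruct (Nat.eq_dec j n). subst. right; now left.
    left. exists j. split; auto. lia.
Qed.

Lemma sort_seq a s : (forall i, 0 <= a i) -> ser a s ->
  exists c, (forall i, 0 <= c i) /\ (forall n, c (S n) <= c n) /\ ser c s /\
    (forall x, ach a x <-> ach c x).
Proof.
  intros Ha Hs.
  assert (P : forall L, pickP a L (pick a L)).
  { intro L. unfold pick. apply epsilon_spec. apply (pick_ex a s Ha Hs). }
  assert (Hinj : forall i j, sg a i = sg a j -> i = j).
  { assert (forall i j, (i < j)%nat -> sg a i <> sg a j).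
    { intros i j Hij E. destruct (P (Lst a j)) as [Hn _]. apply Hn. fold (sg a j).
      apply Lst_In. exists i. auto. }
    intros i j E. destruct (Nat.lt_trichotomy i j) as [h|[h|h]]; auto.
    exfalso; eapply H; eauto. exfalso; eapply H; eauto. }
  assert (Hmono : forall n, a (sg a (S n)) <= a (sg a n)).
  { intro n. unfold sg at 2. apply (proj2 (P (Lst a n))).
    intro Hin. destruct (P (Lst a (S n))) as [Hn _]. apply Hn. simpl. apply in_or_app. now left. }
  assert (Hcov : forall m, a m <> 0 -> exists n, sg a n = m).
  { intros m Hm. apply Classical_Prop.NNPP. intro Hno.
    assert (Hge : forall n, a m <= a (sg a n)).
    { intro n. unfold sg. apply (proj2 (P (Lst a n))). intro Hin. apply Lst_In in Hin.
      destruct Hin as [j [_ E]]. apply Hno. eauto. }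
    assert (Hpos : 0 < a m) by (pose proof (Ha m); lra).
    destruct (INR_archimed (a m) s Hpos) as [n Hn].
    assert (INR n * a m <= PS (fun k => a (sg a k)) n).
    { clear Hn. induction n. simpl. lra. rewrite S_INR. simpl. specialize (Hge n). lra. }
    pose proof (rearr_bound a (sg a) s n Ha Hinj Hs). lra. }
  exists (fun n => a (sg a n)). split; [|split; [|split]].
  - intro; apply Ha.
  - exact Hmono.
  - apply rearr; auto.
  - intro x. split.
    + intros [A HA]. exists (fun n => A (sg a n)).
      apply ser_ext with (f := fun n => mask A a (sg a n)). intro; reflexivity.
      apply rearr; auto. intro; apply mask_nonneg, Ha.
      intros m Hm. apply Hcov. unfold mask in Hm. destruct (A m); [exact Hm | exfalso; apply Hm; reflexivity].
    + intros [B HB].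
      set (A := fun m => if excluded_middle_informative (exists n, sg a n = m /\ B n = true) then true else false).
      destruct (mono_conv (mask A a) s) as [y [Hy _]].
      { intro; apply mask_nonneg, Ha. }
      { intro n. eapply Rle_trans. apply PS_le. intros i _. apply (mask_le A a i Ha).
        apply ser_PS_le; auto. }
      exists A. replace x with y. exact Hy.
      apply (ser_unique (mask B (fun n => a (sg a n)))); auto.
      apply ser_ext with (f := fun n => mask A a (sg a n)).
      { intro n. unfold mask, A. destruct (excluded_middle_informative _) as [[n' [E Hb]]|Hn].
        - apply Hinj in E. subst. rewrite Hb. reflexivity.
        - destruct (B n) eqn:Eb; auto. exfalso. apply Hn. eauto. }
      apply rearr; auto. intro; apply mask_nonneg, Ha.
      intros m Hm. apply Hcov. unfold mask in Hm. destruct (A m); [exact Hm | exfalso; apply Hm; reflexivity].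
Qed.
Lemma my_choice {A B : Type} (P : A -> B -> Prop) : (forall a, exists b, P a b) -> exists f, forall a, P a (f a).
Proof.
  intros H. exists (fun a => proj1_sig (constructive_indefinite_description _ (H a))).
  intro a. exact (proj2_sig (constructive_indefinite_description _ (H a))).
Qed.

Definition Good (u : nat -> nat -> R) n (f : nat -> R) :=
  forall e, 0 < e -> forall k0, exists k, (k0 <= k)%nat /\ forall i, (i < n)%nat -> Rabs (u k i - f i) < e.

Lemma BW01 (v : nat -> R) : (forall j, 0 <= v j <= 1) ->
  exists l, forall e, 0 < e -> forall J, exists j, (J <= j)%nat /\ Rabs (v j - l) < e.
Proof.
  intros H. destruct (Bolzano_Weierstrass v (fun c => 0 <= c <= 1) (compact_P3 0 1) H) as [l Hl].
  exists l. intros e He J.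
  destruct (Hl (disc l (mkposreal e He)) J) as [p [Hp Hv]].
  { exists (mkposreal e He). intros y Hy; exact Hy. }
  exists p. split; auto.
Qed.

Lemma inv_small e : 0 < e -> exists J, forall j, (J <= j)%nat -> / INR (S j) < e.
Proof.
  intros He. destruct (INR_archimed e 1 He) as [n Hn]. exists n. intros j Hj.
  assert (INR n <= INR (S j)) by (apply le_INR; lia).
  assert (0 < INR (S j)) by (apply lt_0_INR; lia).
  apply (Rmult_lt_reg_l (INR (S j))); auto. rewrite Rinv_r by lra. nra.
Qed.

Lemma inv_pos j : 0 < / INR (S j).
Proof. apply Rinv_0_lt_compat, lt_0_INR; lia. Qed.

Definition upd (f : nat -> R) n y i := if Nat.eq_dec i n then y else f i.

Lemma good_step u n f : (forall k i, 0 <= u k i <= 1) -> Good u n f -> exists y, Good u (S n) (upd f n y).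
Proof.
  intros Hu G.
  assert (H : forall j, exists k, (j <= k)%nat /\ forall i, (i < n)%nat -> Rabs (u k i - f i) < / INR (S j)).
  { intro j. apply G. apply inv_pos. }
  destruct (my_choice _ H) as [kk Hkk].
  destruct (BW01 (fun j => u (kk j) n)) as [y Hy]. { intro; apply Hu. }
  exists y. intros e He k0. destruct (inv_small e He) as [J HJ].
  destruct (Hy e He (Nat.max J k0)) as [j [Hj Hv]].
  destruct (Hkk j) as [Hk1 Hk2].
  exists (kk j). split. lia. intros i Hi. unfold upd. destruct (Nat.eq_dec i n).
  - subst. exact Hv.
  - eapply Rlt_trans. apply Hk2. lia. apply HJ. lia.
Qed.

Fixpoint Fd u n : nat -> R :=
  match n with
  | O => fun _ => 0
  | S m => upd (Fd u m) m (epsilon (inhabits 0) (fun y => Good u (S m) (upd (Fd u m) m y)))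
  end.

Lemma diagonal u : (forall k i, 0 <= u k i <= 1) -> exists f, forall n, Good u n f.
Proof.
  intros Hu.
  assert (G : forall n, Good u n (Fd u n)).
  { induction n.
    - intros e He k0. exists k0. split. lia. intros; lia.
    - simpl. apply epsilon_spec. apply good_step; auto. }
  assert (St : forall i m, (i < m)%nat -> Fd u m i = Fd u (S i) i).
  { intros i m Him. induction Him. reflexivity.
    simpl. unfold upd at 1. destruct (Nat.eq_dec i m). lia. exact IHHim. }
  exists (fun i => Fd u (S i) i). intros n e He k0.
  destruct (G n e He k0) as [k [Hk Hi]]. exists k. split; auto.
  intros i Hin. rewrite <- (St i n Hin). auto.
Qed.
Lemma ach_closed d D x : (forall i, 0 <= d i) -> ser d D ->
  (forall del, 0 < del -> exists y, ach d y /\ Rabs (y - x) < del) -> ach d x.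
Proof.
  intros Hd HD Hx.
  assert (H : forall k, exists p : (nat -> bool) * R, ser (mask (fst p) d) (snd p) /\ Rabs (snd p - x) < / INR (S k)).
  { intro k. destruct (Hx _ (inv_pos k)) as [y [[A HA] Hy]]. exists (A, y). auto. }
  destruct (my_choice _ H) as [p Hp].
  set (u := fun k n => if fst (p k) n then 1 else 0).
  destruct (diagonal u) as [f Hf].
  { intros k i. unfold u. destruct (fst (p k) i); lra. }
  set (Ab := fun n => if Rlt_dec (1/2) (f n) then true else false).
  exists Ab. intros e He.
  destruct (HD (e/4) ltac:(lra)) as [N0 HN0].
  destruct (inv_small (e/4) ltac:(lra)) as [J HJ].
  exists N0. intros N HN. unfold R_dist.
  destruct (Hf N (1/2) ltac:(lra) J) as [k [Hk Hclose]].
  assert (Eq : PS (mask Ab d) N = PS (mask (fst (p k)) d) N).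
  { apply PS_ext. intros i Hi. specialize (Hclose i Hi). unfold mask, Ab, u in *.
    destruct (fst (p k) i); destruct (Rlt_dec (1/2) (f i)); auto.
    - exfalso. rewrite Rabs_minus_sym in Hclose. apply Rabs_def2 in Hclose. lra.
    - exfalso. apply Rabs_def2 in Hclose. lra. }
  rewrite Eq. destruct (Hp k) as [Hs Hy].
  pose proof (masked_tail d D (fst (p k)) (snd (p k)) N Hd HD Hs) as Tl.
  specialize (HN0 N HN). unfold R_dist in HN0.
  pose proof (ser_PS_le d D N Hd HD).
  rewrite Rabs_left1 in HN0 by lra.
  specialize (HJ k Hk).
  apply Rabs_def2 in Hy. apply Rabs_def1; lra.
Qed.

Lemma prefix_dense g Rt del y : 0 < del -> (forall i, 0 <= g i <= del) -> ser g Rt -> 0 <= y <= Rt ->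
  exists m, Rabs (PS g m - y) <= del.
Proof.
  intros Hdel Hg HR Hy.
  destruct (Rle_lt_dec y del).
  { exists O. simpl. rewrite Rabs_left1 by lra. lra. }
  assert (Cl : forall m, PS g m <= y - del \/ exists m', Rabs (PS g m' - y) <= del).
  { induction m. left. simpl. lra.
    destruct IHm as [h|h]; [|right; exact h].
    destruct (Rle_lt_dec (PS g (S m)) (y - del)). left; auto.
    right. exists (S m). simpl in *. specialize (Hg m). apply Rabs_le. lra. }
  destruct (HR del Hdel) as [M HM]. specialize (HM M (le_n M)). unfold R_dist in HM.
  apply Rabs_def2 in HM. destruct (Cl M) as [h|h]; auto. lra.
Qed.

Definition geo t n := t / 2 ^ (S n).

Lemma PS_geo t n : PS (geo t) n = t - t / 2 ^ n.
Proof.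
  induction n. simpl. field. simpl PS. rewrite IHn. unfold geo.
  assert (0 < 2 ^ n) by (apply pow_lt; lra). simpl. field. lra.
Qed.

Definition bupd (A : nat -> bool) N b i := if Nat.eq_dec i N then b else A i.

Lemma greedy t y N : 0 <= y <= t -> exists A,
  PS (mask A (geo t)) N <= y <= PS (mask A (geo t)) N + t / 2 ^ N.
Proof.
  intros Hy. induction N.
  - exists (fun _ => false). simpl. lra.
  - destruct IHN as [A HA].
    assert (Hq : 0 < 2 ^ N) by (apply pow_lt; lra).
    assert (E2 : t / 2 ^ N = 2 * (t / 2 ^ S N)) by (simpl; field; lra).
    assert (Ext : forall b, PS (mask (bupd A N b) (geo t)) N = PS (mask A (geo t)) N).
    { intro b. apply PS_ext. intros i Hi. unfold mask, bupd. destruct (Nat.eq_dec i N). lia. reflexivity. }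
    destruct (Rle_lt_dec (t / 2 ^ S N) (y - PS (mask A (geo t)) N)).
    + exists (bupd A N true). simpl PS. rewrite Ext.
      replace (mask (bupd A N true) (geo t) N) with (geo t N) by (unfold mask, bupd; destruct (Nat.eq_dec N N); [reflexivity|lia]).
      change (geo t N) with (t / 2 ^ S N). lra.
    + exists (bupd A N false). simpl PS. rewrite Ext.
      replace (mask (bupd A N false) (geo t) N) with 0 by (unfold mask, bupd; destruct (Nat.eq_dec N N); [reflexivity|lia]).
      lra.
Qed.

Definition inter (u v : nat -> R) n := if Nat.even n then u (Nat.div2 n) else v (Nat.div2 n).

Lemma inter_even u v n : inter u v (2 * n) = u n.
Proof. unfold inter. rewrite Nat.even_even, Nat.div2_double. reflexivity. Qed.
Lemma inter_odd u v n : inter u v (2 * n + 1) = v n.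
Proof. unfold inter. rewrite Nat.even_odd, Nat.div2_odd'. reflexivity. Qed.

Lemma PS_inter_gen d u v N : (forall n, d (2 * n)%nat = u n) -> (forall n, d (2 * n + 1)%nat = v n) ->
  PS d (2 * N) = PS u N + PS v N.
Proof.
  intros Hu Hv. induction N. simpl. ring.
  replace (2 * S N)%nat with (S (S (2 * N))) by lia.
  replace (PS d (S (S (2 * N)))) with (PS d (2*N) + d (2*N)%nat + d (S (2*N))) by reflexivity.
  change (PS u (S N)) with (PS u N + u N). change (PS v (S N)) with (PS v N + v N). rewrite IHN.
  rewrite Hu. replace (S (2 * N)) with (2 * N + 1)%nat by lia. rewrite Hv. ring.
Qed.

Lemma even_or_odd n : exists m, n = (2 * m)%nat \/ n = (2 * m + 1)%nat.
Proof.
  destruct (Nat.Even_or_Odd n) as [[m Hm]|[m Hm]]; exists m; lia.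
Qed.

Lemma glb_props (P : R -> Prop) r0 : P r0 -> (forall r, P r -> 0 <= r) ->
  0 <= real (Glb_Rbar P) <= r0 /\ forall e, real (Glb_Rbar P) < e -> exists r, P r /\ r < e.
Proof.
  intros H0 Hp. destruct (Glb_Rbar_correct P) as [Hlb Hgr].
  assert (Z : Rbar_le 0 (Glb_Rbar P)) by (apply Hgr; intros x Hx; simpl; apply Hp; auto).
  pose proof (Hlb r0 H0) as L0.
  destruct (Glb_Rbar P) as [g| |]; simpl in *; try contradiction.
  split. lra. intros e He. apply Classical_Prop.NNPP. intro Hno.
  assert (Rbar_le e g). { apply Hgr. intros x Hx. simpl. destruct (Rle_lt_dec e x); auto. exfalso; apply Hno; eauto. }
  simpl in H. lra.
Qed.

Lemma lub_bound (P : R -> Prop) r : (forall x, P x -> 0 <= x <= 1) -> P r -> r <= real (Lub_Rbar P).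
Proof.
  intros Hp Hr. destruct (Lub_Rbar_correct P) as [Hub Hl].
  assert (O : Rbar_le (Lub_Rbar P) 1) by (apply Hl; intros x Hx; simpl; apply Hp; auto).
  pose proof (Hub r Hr) as L0.
  destruct (Lub_Rbar P) as [g| |]; simpl in *; try contradiction. lra.
Qed.

Lemma dist_props x B : (exists b, B b) -> in_unit_interval B -> 0 <= x <= 1 ->
  0 <= dist_set x B <= 1 /\ forall e, dist_set x B < e -> exists b, B b /\ Rabs (x - b) < e.
Proof.
  intros [b0 Hb0] HB Hx. unfold dist_set.
  destruct (glb_props (fun r => exists b, B b /\ r = Rabs (x - b)) (Rabs (x - b0))) as [H1 H2].
  { eauto. }
  { intros r [b [_ ->]]. apply Rabs_pos. }
  split.
  - specialize (HB b0 Hb0). split. lra. eapply Rle_trans. apply H1. apply Rabs_le. lra.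
  - intros e He. destruct (H2 e He) as [r [[b [Hb ->]] Hr]]. eauto.
Qed.

Lemma hd_extract K K' e : (exists x, K x) -> (exists x, K' x) -> in_unit_interval K -> in_unit_interval K' ->
  hausdorff_dist K' K < e ->
  (forall x, K' x -> exists y, K y /\ Rabs (x - y) < e) /\
  (forall y, K y -> exists x, K' x /\ Rabs (x - y) < e).
Proof.
  intros HK HK' UK UK' Hd. unfold hausdorff_dist in Hd.
  pose proof (Rmax_l (real (Lub_Rbar (fun r => exists a, K' a /\ r = dist_set a K)))
                     (real (Lub_Rbar (fun r => exists b, K b /\ r = dist_set b K')))).
  pose proof (Rmax_r (real (Lub_Rbar (fun r => exists a, K' a /\ r = dist_set a K)))
                     (real (Lub_Rbar (fun r => exists b, K b /\ r = dist_set b K')))).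
  split.
  - intros x Hx. destruct (dist_props x K HK UK (UK' x Hx)) as [_ D2]. apply D2.
    eapply Rle_lt_trans. 2: eapply Rle_lt_trans; [apply H|apply Hd].
    apply lub_bound. intros r [a [Ha ->]]. apply (dist_props a K HK UK (UK' a Ha)). eauto.
  - intros y Hy. destruct (dist_props y K' HK' UK' (UK y Hy)) as [_ D2].
    destruct (D2 e) as [x [Hx Hxy]].
    + eapply Rle_lt_trans. 2: eapply Rle_lt_trans; [apply H0|apply Hd].
      apply lub_bound. intros r [a [Ha ->]]. apply (dist_props a K' HK' UK' (UK a Ha)). eauto.
    + exists x. split; auto. rewrite Rabs_minus_sym. auto.
Qed.
Lemma ach_split f A N m : ach f (PS (mask A f) N + PS (fun i => f (N + i)%nat) m).
Proof.
  set (C := fun i => orb (andb (Nat.ltb i N) (A i)) (andb (Nat.leb N i) (Nat.ltb i (N + m)))).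
  exists C.
  assert (E : PS (mask C f) (N + m) = PS (mask A f) N + PS (fun i => f (N + i)%nat) m).
  { rewrite PS_add. f_equal.
    - apply PS_ext. intros i Hi. unfold mask, C.
      replace (Nat.ltb i N) with true by (symmetry; apply Nat.ltb_lt; lia).
      replace (Nat.leb N i) with false by (symmetry; apply Nat.leb_gt; lia).
      destruct (A i); reflexivity.
    - apply PS_ext. intros i Hi. unfold mask, C.
      replace (Nat.ltb (N + i) N) with false by (symmetry; apply Nat.ltb_ge; lia).
      replace (Nat.leb N (N + i)) with true by (symmetry; apply Nat.leb_le; lia).
      replace (Nat.ltb (N + i) (N + m)) with true by (symmetry; apply Nat.ltb_lt; lia).
      reflexivity. }
  rewrite <- E. apply ser_finite. intros i Hi. unfold mask, C.
  replace (Nat.ltb i N) with false by (symmetry; apply Nat.ltb_ge; lia).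
  replace (Nat.ltb i (N + m)) with false by (symmetry; apply Nat.ltb_ge; lia).
  destruct (Nat.leb N i); reflexivity.
Qed.

Lemma ach_prefix f n : ach f (PS f n).
Proof.
  pose proof (ach_split f (fun _ => false) 0 n). simpl in H.
  rewrite Rplus_0_l in H. exact H.
Qed.

Lemma PS_mask_trunc f A N M : (N <= M)%nat ->
  PS (mask (fun i => andb (Nat.ltb i N) (A i)) f) M = PS (mask A f) N.
Proof.
  intros H. rewrite (PS_zero_after _ N M); auto.
  - apply PS_ext. intros i Hi. unfold mask. replace (Nat.ltb i N) with true by (symmetry; apply Nat.ltb_lt; lia). reflexivity.
  - intros i Hi. unfold mask. replace (Nat.ltb i N) with false by (symmetry; apply Nat.ltb_ge; lia). reflexivity.
Qed.

Lemma ach_inter_finite b w A N A' N' :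
  ach (inter b w) (PS (mask A b) N + PS (mask A' w) N').
Proof.
  set (u := mask (fun i => andb (Nat.ltb i N) (A i)) b).
  set (v := mask (fun i => andb (Nat.ltb i N') (A' i)) w).
  set (C := fun n => if Nat.even n then andb (Nat.ltb (Nat.div2 n) N) (A (Nat.div2 n))
                     else andb (Nat.ltb (Nat.div2 n) N') (A' (Nat.div2 n))).
  set (M := Nat.max N N').
  assert (Ev : forall n, mask C (inter b w) (2 * n)%nat = u n).
  { intro n. unfold mask, C, u. rewrite inter_even, Nat.even_even, Nat.div2_double. reflexivity. }
  assert (Od : forall n, mask C (inter b w) (2 * n + 1)%nat = v n).
  { intro n. unfold mask, C, v. rewrite inter_odd, Nat.even_odd, Nat.div2_odd'. reflexivity. }
  exists C.
  replace (PS (mask A b) N + PS (mask A' w) N') with (PS (mask C (inter b w)) (2 * M)).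
  - apply ser_finite. intros i Hi. destruct (even_or_odd i) as [m [->| ->]].
    + rewrite Ev. unfold u, mask. replace (Nat.ltb m N) with false by (symmetry; apply Nat.ltb_ge; lia). reflexivity.
    + rewrite Od. unfold v, mask. replace (Nat.ltb m N') with false by (symmetry; apply Nat.ltb_ge; lia). reflexivity.
  - rewrite (PS_inter_gen _ u v M Ev Od). unfold u, v.
    rewrite !PS_mask_trunc by lia. reflexivity.
Qed.

Lemma pow2_ge n : INR n <= 2 ^ n.
Proof.
  induction n. simpl. lra. rewrite S_INR. simpl.
  assert (1 <= 2 ^ n) by (apply pow_R1_Rle; lra). lra.
Qed.

Lemma geo_small t e : 0 <= t -> 0 < e -> exists N, t / 2 ^ N < e.
Proof.
  intros Ht He. destruct (INR_archimed e t He) as [n Hn]. exists n.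
  pose proof (pow2_ge n). assert (0 < 2 ^ n) by (apply pow_lt; lra).
  apply (Rmult_lt_reg_l (2 ^ n)); auto. unfold Rdiv.
  replace (2 ^ n * (t * / 2 ^ n)) with t by (field; lra). nra.
Qed.

Lemma PS_mask_diff f g A N eta : (forall i, (i < N)%nat -> Rabs (f i - g i) <= eta) ->
  Rabs (PS (mask A f) N - PS (mask A g) N) <= INR N * eta.
Proof.
  intros H. apply PS_diff. intros i Hi. unfold mask. destruct (A i). auto.
  rewrite Rminus_0_r, Rabs_R0. specialize (H i Hi). pose proof (Rabs_pos (f i - g i)). lra.
Qed.

Lemma noninc_le c N i : (forall n, c (S n) <= c n) -> c (N + i)%nat <= c N.
Proof.
  intros H. induction i. rewrite Nat.add_0_r. lra.
  rewrite Nat.add_succ_r. specialize (H (N + i)%nat). lra.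
Qed.

Lemma Rabs_le_inv a b : Rabs a <= b -> - b <= a <= b.
Proof.
  intros H. pose proof (Rle_abs a). pose proof (Rle_abs (- a)). rewrite Rabs_Ropp in H1. lra.
Qed.
Lemma core (K : R -> Prop) :
  in_unit_interval K ->
  (forall x, (forall del, 0 < del -> exists y, K y /\ Rabs (y - x) < del) -> K x) ->
  (forall k : nat, exists a, (forall n, 0 <= a n) /\ (forall x, ach a x -> x <= 1) /\
     (forall x, ach a x -> exists y, K y /\ Rabs (x - y) < / INR (S k)) /\
     (forall y, K y -> exists x, ach a x /\ Rabs (x - y) < / INR (S k))) ->
  exists d, (forall n, 0 <= d n) /\ (exists D, ser d D) /\ forall x, K x <-> ach d x.
Proof.
  intros UK CK Hk.
  assert (H2 : forall k, exists p : R * (nat -> R),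
    (forall i, 0 <= snd p i) /\ (forall n, snd p (S n) <= snd p n) /\ ser (snd p) (fst p) /\
    fst p <= 1 /\
    (forall x, ach (snd p) x -> exists y, K y /\ Rabs (x - y) < / INR (S k)) /\
    (forall y, K y -> exists x, ach (snd p) x /\ Rabs (x - y) < / INR (S k))).
  { intro k. destruct (Hk k) as [a [Ha [Ha1 [HH1 HH2]]]].
    destruct (mono_conv a 1 Ha) as [s [Hs Hs1]].
    { intro n. apply Ha1. apply ach_prefix. }
    destruct (sort_seq a s Ha Hs) as [c [Hc [Hcm [Hcs Hce]]]].
    exists (s, c). simpl. repeat split; auto.
    - intros x Hx. apply HH1. apply Hce. auto.
    - intros y Hy. destruct (HH2 y Hy) as [x [Hx1 Hx2]]. exists x. split; auto. apply Hce; auto. }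
  destruct (my_choice _ H2) as [pp Hpp].
  set (ss := fun k => fst (pp k)). set (cc := fun k => snd (pp k)).
  assert (Hc0 : forall k i, 0 <= cc k i) by (intros; apply Hpp).
  assert (Hcm : forall k n, cc k (S n) <= cc k n) by (intros; apply Hpp).
  assert (Hcs : forall k, ser (cc k) (ss k)) by (intros; apply Hpp).
  assert (Hs1 : forall k, ss k <= 1) by (intros; apply Hpp).
  assert (HA1 : forall k x, ach (cc k) x -> exists y, K y /\ Rabs (x - y) < / INR (S k)) by (intros; apply Hpp; auto).
  assert (HA2 : forall k y, K y -> exists x, ach (cc k) x /\ Rabs (x - y) < / INR (S k)) by (intros; apply Hpp; auto).
  clear Hpp H2 Hk.
  assert (Hci : forall k i, 0 <= cc k i <= ss k).
  { intros k i. split; auto. pose proof (ser_PS_le (cc k) (ss k) (S i) (Hc0 k) (Hcs k)).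
    simpl in H. pose proof (PS_nonneg (cc k) i (Hc0 k)). lra. }
  assert (Hss : forall k, 0 <= ss k).
  { intro k. pose proof (Hci k O). lra. }
  set (u := fun k n => match n with O => ss k | S m => cc k m end).
  destruct (diagonal u) as [f Hf].
  { intros k [|i]; simpl; split; try apply Hss; try apply Hs1; try apply Hci.
    pose proof (Hci k i); pose proof (Hs1 k); lra. }
  set (s := f O). set (b := fun m => f (S m)).
  assert (Clu : forall N e k0, 0 < e -> exists k, (k0 <= k)%nat /\ Rabs (ss k - s) < e /\
            forall m, (m < N)%nat -> Rabs (cc k m - b m) < e).
  { intros N e k0 He. destruct (Hf (S N) e He k0) as [k [Hk Hi]]. exists k. split; auto. split.
    - apply (Hi O). lia.
    - intros m Hm. apply (Hi (S m)). lia. }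
  assert (Hb0 : forall m, 0 <= b m).
  { intro m. destruct (Rle_lt_dec 0 (b m)); auto. exfalso.
    destruct (Clu (S m) (- b m) O ltac:(lra)) as [k [_ [_ Hk]]].
    specialize (Hk m ltac:(lia)). apply Rabs_def2 in Hk. pose proof (Hc0 k m). lra. }
  assert (Hbm : forall m, b (S m) <= b m).
  { intro m. destruct (Rle_lt_dec (b (S m)) (b m)); auto. exfalso.
    destruct (Clu (S (S m)) ((b (S m) - b m) / 2) O ltac:(lra)) as [k [_ [_ Hk]]].
    pose proof (Hk m ltac:(lia)). pose proof (Hk (S m) ltac:(lia)).
    apply Rabs_def2 in H. apply Rabs_def2 in H0. pose proof (Hcm k m). lra. }
  assert (Heta : forall N e, 0 < e -> 0 < e / (INR N + 1) /\ e / (INR N + 1) <= e /\ INR N * (e / (INR N + 1)) <= e).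
  { intros N e He. pose proof (pos_INR N). split; [|split].
    - apply Rdiv_lt_0_compat; lra.
    - apply (Rmult_le_reg_l (INR N + 1)). lra. unfold Rdiv. field_simplify; nra.
    - apply (Rmult_le_reg_l (INR N + 1)). lra. unfold Rdiv. field_simplify; nra. }
  assert (HbS : forall N, PS b N <= s).
  { intro N. apply le_epsilon. intros e He.
    destruct (Heta N (e/2) ltac:(lra)) as [E1 [E2 E3]].
    destruct (Clu N (e / 2 / (INR N + 1)) O E1) as [k [_ [Hk1 Hk2]]].
    pose proof (PS_diff (cc k) b N (e / 2 / (INR N + 1)) (fun m Hm => Rlt_le _ _ (Hk2 m Hm))).
    pose proof (ser_PS_le (cc k) (ss k) N (Hc0 k) (Hcs k)).
    apply Rabs_def2 in Hk1. apply Rabs_le_inv in H. lra. }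
  destruct (mono_conv b s Hb0 HbS) as [B [HB HBs]].
  set (t := s - B).
  assert (Ht : 0 <= t) by (unfold t; lra).
  assert (HBle : forall N, PS b N <= B) by (intro; apply ser_PS_le; auto).
  set (d := inter b (geo t)).
  assert (Hgeo0 : forall n, 0 <= geo t n).
  { intro n. unfold geo. apply Rmult_le_pos; auto. left. apply Rinv_0_lt_compat, pow_lt; lra. }
  assert (Hgeot : forall n, PS (geo t) n <= t).
  { intro n. rewrite PS_geo. assert (0 < 2 ^ n) by (apply pow_lt; lra).
    assert (0 <= t / 2 ^ n) by (apply Rmult_le_pos; auto; left; apply Rinv_0_lt_compat; auto). lra. }
  assert (Hd0 : forall n, 0 <= d n).
  { intro n. unfold d, inter. destruct (Nat.even n); auto. }
  assert (Hdev : forall n, d (2 * n)%nat = b n) by (intro; apply inter_even).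
  assert (Hdod : forall n, d (2 * n + 1)%nat = geo t n) by (intro; apply inter_odd).
  destruct (mono_conv d (B + t) Hd0) as [D [HD _]].
  { intro n. eapply Rle_trans. apply (PS_mono d n (2 * n) Hd0). lia.
    rewrite (PS_inter_gen d b (geo t) n Hdev Hdod). pose proof (HBle n). pose proof (Hgeot n). lra. }
  assert (II : forall A N0 y, 0 <= y <= t -> K (PS (mask A b) N0 + y)).
  { intros A N0 y Hy. apply CK. intros del Hdel. set (e := del / 8).
    assert (He : 0 < e) by (unfold e; lra).
    assert (Hde : del = 8 * e) by (unfold e; field).
    destruct (HB e He) as [N1 HN1]. specialize (HN1 N1 (le_n _)). unfold R_dist in HN1.
    set (N := Nat.max N0 N1).
    assert (HtailN : B - PS b N < e).
    { pose proof (PS_mono b N1 N Hb0 ltac:(lia)). apply Rabs_def2 in HN1. pose proof (HBle N1). lra. }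
    assert (HbN : b N < e).
    { pose proof (HBle (S N)). simpl in H. lra. }
    set (A0 := fun i => andb (Nat.ltb i N0) (A i)).
    assert (HX : PS (mask A0 b) N = PS (mask A b) N0) by (apply PS_mask_trunc; lia).
    destruct (inv_small e He) as [J HJ].
    destruct (Heta (S N) e He) as [E1 [E2 E3]].
    set (eta := e / (INR (S N) + 1)) in *.
    destruct (Clu (S N) eta J E1) as [k [Hk [Hk1 Hk2]]].
    assert (Hk3 : forall m, (m < N)%nat -> Rabs (cc k m - b m) <= eta) by (intros; left; apply Hk2; lia).
    assert (HINR : INR N * eta <= e).
    { eapply Rle_trans. 2: exact E3. apply Rmult_le_compat_r. lra. apply le_INR. lia. }
    pose proof (PS_diff (cc k) b N eta Hk3) as Dfull.
    pose proof (PS_mask_diff (cc k) b A0 N eta Hk3) as Dmask.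
    set (g := fun i => cc k (N + i)%nat).
    set (Rt := ss k - PS (cc k) N).
    assert (Hg : ser g Rt) by (apply ser_tail; auto).
    assert (HcN : cc k N < 2 * e).
    { pose proof (Hk2 N ltac:(lia)). apply Rabs_def2 in H. lra. }
    assert (Hgb : forall i, 0 <= g i <= 2 * e).
    { intro i. unfold g. split. apply Hc0. pose proof (noninc_le (cc k) N i (Hcm k)). lra. }
    assert (HRt0 : 0 <= Rt).
    { pose proof (ser_PS_le (cc k) (ss k) N (Hc0 k) (Hcs k)). unfold Rt. lra. }
    assert (HRt : t - 2 * e <= Rt).
    { pose proof (HBle N). unfold Rt, t. apply Rabs_def2 in Hk1. apply Rabs_le_inv in Dfull. lra. }
    set (ys := Rmin y Rt).
    assert (Hys : 0 <= ys <= Rt /\ Rabs (y - ys) <= 2 * e).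
    { unfold ys. destruct (Rle_dec y Rt).
      - rewrite Rmin_left by lra. rewrite Rminus_eq_0, Rabs_R0. lra.
      - rewrite Rmin_right by lra. rewrite Rabs_right by lra. lra. }
    destruct Hys as [Hys1 Hys2].
    destruct (prefix_dense g Rt (2 * e) ys ltac:(lra) Hgb Hg Hys1) as [m Hm].
    destruct (HA1 k (PS (mask A0 (cc k)) N + PS g m)) as [z [Hz Hzd]].
    { apply ach_split. }
    pose proof (HJ k Hk).
    exists z. split; auto.
    rewrite <- HX.
    apply Rabs_le_inv in Dmask. apply Rabs_le_inv in Hm. apply Rabs_le_inv in Hys2.
    apply Rabs_def2 in Hzd. apply Rabs_def1; lra. }
  exists d. split; auto. split. exists D; auto.
  intro x. split.
  -
    intro Hx. apply (ach_closed d D x Hd0 HD). intros del Hdel. set (e := del / 8).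
    assert (He : 0 < e) by (unfold e; lra).
    assert (Hde : del = 8 * e) by (unfold e; field).
    destruct (HB e He) as [N HN]. specialize (HN N (le_n _)). unfold R_dist in HN.
    destruct (inv_small e He) as [J HJ].
    destruct (Heta N e He) as [E1 [E2 E3]].
    set (eta := e / (INR N + 1)) in *.
    destruct (Clu N eta J E1) as [k [Hk [Hk1 Hk2]]].
    assert (Hk3 : forall m, (m < N)%nat -> Rabs (cc k m - b m) <= eta) by (intros; left; apply Hk2; lia).
    pose proof (PS_diff (cc k) b N eta Hk3) as Dfull.
    destruct (HA2 k x Hx) as [x' [[A HA] Hx']].
    pose proof (PS_mask_diff (cc k) b A N eta Hk3) as Dmask.
    pose proof (masked_tail (cc k) (ss k) A x' N (Hc0 k) (Hcs k) HA) as Tl.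
    set (r := x' - PS (mask A (cc k)) N) in *.
    assert (Er : r = x' - PS (mask A (cc k)) N) by reflexivity.
    set (y0 := Rmin r t).
    assert (Hy0 : 0 <= y0 <= t /\ Rabs (r - y0) <= 3 * e).
    { apply Rabs_def2 in Hk1. apply Rabs_le_inv in Dfull. apply Rabs_def2 in HN. pose proof (HBle N).
      unfold y0. destruct (Rle_dec r t).
      - rewrite Rmin_left by lra. rewrite Rminus_eq_0, Rabs_R0. lra.
      - rewrite Rmin_right by lra. rewrite Rabs_right by lra. unfold t in *. lra. }
    destruct Hy0 as [Hy0 Hy0d].
    destruct (geo_small t e Ht He) as [N' HN'].
    destruct (greedy t y0 N' Hy0) as [A' HA'].
    exists (PS (mask A b) N + PS (mask A' (geo t)) N'). split.
    + apply ach_inter_finite.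
    + pose proof (HJ k Hk). apply Rabs_def2 in Hx'. apply Rabs_le_inv in Dmask.
      apply Rabs_le_inv in Hy0d. apply Rabs_def1; lra.
  -
    intros [A HA]. apply CK. intros del Hdel.
    destruct (HA del Hdel) as [M HM]. specialize (HM (2 * M)%nat ltac:(lia)). unfold R_dist in HM.
    set (Ae := fun n => A (2 * n)%nat). set (Ao := fun n => A (2 * n + 1)%nat).
    assert (E : PS (mask A d) (2 * M) = PS (mask Ae b) M + PS (mask Ao (geo t)) M).
    { apply PS_inter_gen; intro n; unfold mask, Ae, Ao; [rewrite Hdev|rewrite Hdod]; reflexivity. }
    exists (PS (mask A d) (2 * M)). split; auto.
    rewrite E. apply II. split. apply PS_nonneg. intro; apply mask_nonneg; auto.
    eapply Rle_trans. 2: apply (Hgeot M). apply PS_le. intros; apply mask_le; auto.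
Qed.
Lemma closed_of_compact K : compact K ->
  forall x, (forall del, 0 < del -> exists y, K y /\ Rabs (y - x) < del) -> K x.
Proof.
  intros HK x Hx. apply compact_P2 in HK. apply closed_set_P1 in HK.
  destruct HK as [_ H]. apply H. intros V [delta Hd].
  destruct (Hx delta (cond_pos delta)) as [y [Hy Hyx]].
  exists y. split. apply Hd. exact Hyx. exact Hy.
Qed.

Lemma ach_single a n : ach a (a n).
Proof.
  pose proof (ach_split a (fun _ => false) n 1) as H. simpl in H.
  replace (PS (mask (fun _ => false) a) n) with 0 in H.
  - rewrite Nat.add_0_r in H. replace (0 + (0 + a n)) with (a n) in H by ring. exact H.
  - symmetry. rewrite (PS_ext _ (fun _ => 0) n) by (intros; reflexivity). clear H.
    induction n; simpl; [reflexivity| rewrite IHn; ring].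
Qed.

Lemma reduce (inX : (R -> Prop) -> Prop) :
  (forall K, inX K -> (exists x, K x) /\ compact K /\ in_unit_interval K) ->
  closed_in_hausdorff inX in_calA.
Proof.
  intros HX K HK HnA. destruct (HX K HK) as [Kne [Kc KU]].
  apply Classical_Prop.NNPP. intro Hno. apply HnA.
  assert (Hk : forall k : nat, exists a, (forall n, 0 <= a n) /\ (forall x, ach a x -> x <= 1) /\
     (forall x, ach a x -> exists y, K y /\ Rabs (x - y) < / INR (S k)) /\
     (forall y, K y -> exists x, ach a x /\ Rabs (x - y) < / INR (S k))).
  { intro k.
    assert (H : exists K', inX K' /\ hausdorff_dist K' K < / INR (S k) /\ in_calA K').
    { apply Classical_Prop.NNPP. intro H. apply Hno. exists (/ INR (S k)). split. apply inv_pos.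
      intros K' HK' Hd HA. apply H. eauto. }
    destruct H as [K' [HK' [Hd [a [Hac [Hiff HU]]]]]].
    destruct (HX K' HK') as [K'ne [_ K'U]].
    destruct (hd_extract K K' _ Kne K'ne KU K'U Hd) as [E1 E2].
    exists a. split; [|split; [|split]].
    - intro n. apply (HU (a n)). apply Hiff. apply ach_iff. apply ach_single.
    - intros x Hx. apply HU. apply Hiff. apply ach_iff. auto.
    - intros x Hx. apply E1. apply Hiff, ach_iff; auto.
    - intros y Hy. destruct (E2 y Hy) as [x [Hx Hxy]]. exists x. split; auto. apply ach_iff, Hiff; auto. }
  destruct (core K KU (closed_of_compact K Kc) Hk) as [d [Hd0 [[D HD] Hiff]]].
  exists d. split; [|split].
  - unfold abs_convergent. apply ex_series_ext with (a := d).
    + intro n. rewrite Rabs_pos_eq; auto.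
    + exists D. apply is_series_ser. auto.
  - intro x. rewrite ach_iff. apply Hiff.
  - exact KU.
Qed.

Theorem theorem4p5 :
  closed_in_hausdorff in_K0_01 in_calA /\ closed_in_hausdorff in_K01 in_calA.
Proof.
  split; apply reduce.
  - intros K [H0 [Hc HU]]. split; auto. exists 0; auto.
  - intros K [Hne [Hc HU]]. auto.
Qed.
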